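(* In the setting of the context, suppose in addition that $\mathcal B_1,\mathcal B_2\subset\mathcal B$ are subalgebras such that multiplication $\mathcal B_1\otimes\mathcal B_2\to\mathcal B$ is a linear isomorphism, $\Delta(\mathcal B_1)\subset\mathcal B_1\otimes\mathcal B$, $\Delta(\mathcal B_2)\subset\mathcal B\otimes\mathcal B_2$, and define $\Pi'_1(b_1b_2)=b_1\varepsilon(b_2)$, $\Pi'_2(b_1b_2)=\varepsilon(b_1)b_2$ ($b_i\in\mathcal B_i$). If $\mathcal A_i$ and $\mathcal B_j$ are mutually orthogonal for $i\neq j$, i.e. $\langle a_i,b_j\rangle=\varepsilon(a_i)\varepsilon(b_j)$ for all $a_i\in\mathcal A_i$, $b_j\in\mathcal B_j$, $i\neq j$, then $$(\Pi_i\otimes\mathrm{id})\mathcal R=(\mathrm{id}\otimes\Pi'_i)\mathcal R=(\Pi_i\otimes\Pi'_i)\mathcal R,\qquad i=1,2,$$ so the factorizations $\mathcal R=\mathcal R_1\mathcal R_2$ induced by the decompositions of $\mathcal A$ and of $\mathcal B$ coincide.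
   Context: $\mathcal A$ and $\mathcal B$ are bialgebras (comultiplication $\Delta$, counit $\varepsilon$) with a nondegenerate pairing $\langle\cdot,\cdot\rangle:\mathcal A\otimes\mathcal B\to\mathbb C$ satisfying $\langle a,b_1b_2\rangle=\langle\Delta(a),b_1\otimes b_2\rangle$, $\langle a_1a_2,b\rangle=\langle a_2\otimes a_1,\Delta(b)\rangle$ (graded with finite-dimensional components, tensors in the completed tensor product). $\mathcal R=\sum_\alpha a^\alpha\otimes b_\alpha$ is the canonical tensor ($\sum_\alpha\langle a^\alpha,b\rangle b_\alpha=b$, $\sum_\alpha a^\alpha\langle a,b_\alpha\rangle=a$). $\mathcal A_1,\mathcal A_2\subset\mathcal A$ are subalgebras with multiplication $\mathcal A_1\otimes\mathcal A_2\to\mathcal A$ a linear isomorphism, $\Delta(\mathcal A_1)\subset\mathcal A\otimes\mathcal A_1$, $\Delta(\mathcal A_2)\subset\mathcal A_2\otimes\mathcal A$, and $\Pi_1(a_1a_2)=a_1\varepsilon(a_2)$, $\Pi_2(a_1a_2)=\varepsilon(a_1)a_2$ for $a_i\in\mathcal A_i$. *)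

(* Defs.v *)
From HB Require Import structures.
From mathcomp Require Import all_boot all_order all_algebra.
Set Implicit Arguments. Unset Strict Implicit. Unset Printing Implicit Defensive.
Import GRing.Theory.
Local Open Scope ring_scope.

Section Defs.
Variable F : fieldType.

Definition lin_fun (V : lmodType F) (f : V -> F) : Prop :=
  forall k x y, f (k *: x + y) = k * f x + f y.

(* A finite sum  sum_p p.1 (x) p.2  in the algebraic tensor product U (x) V is
   represented by a list of pairs; two lists represent the same tensor iff
   all pairs of linear functionals agree on them. *)
Definition tev (U V : lmodType F) (phi : U -> F) (psi : V -> F)
  (s : seq (U * V)) : F := \sum_(p <- s) phi p.1 * psi p.2.

Definition teq (U V : lmodType F) (s t : seq (U * V)) : Prop :=
  forall (phi : U -> F) (psi : V -> F), lin_fun phi -> lin_fun psi ->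
    tev phi psi s = tev phi psi t.

Definition tev3 (U V W : lmodType F) (phi : U -> F) (psi : V -> F) (chi : W -> F)
  (s : seq ((U * V) * W)) : F := \sum_(p <- s) phi p.1.1 * psi p.1.2 * chi p.2.

Definition teq3 (U V W : lmodType F) (s t : seq ((U * V) * W)) : Prop :=
  forall (phi : U -> F) (psi : V -> F) (chi : W -> F),
    lin_fun phi -> lin_fun psi -> lin_fun chi ->
    tev3 phi psi chi s = tev3 phi psi chi t.

(* Bialgebra axioms: D a is (a representative of) Delta(a) in A (x) A. *)
Record bialgebra (A : algType F) (D : A -> seq (A * A)) (eps : A -> F) : Prop := {
  eps_lin : lin_fun eps;
  eps_one : eps 1 = 1;
  eps_mul : forall x y, eps (x * y) = eps x * eps y;
  D_lin : forall k x y,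
    teq (D (k *: x + y)) ([seq (k *: p.1, p.2) | p <- D x] ++ D y);
  D_mul : forall x y,
    teq (D (x * y)) [seq (p.1 * q.1, p.2 * q.2) | p <- D x, q <- D y];
  D_one : teq (D 1) [:: (1, 1)];
  D_coass : forall x,
    teq3 [seq ((q.1, q.2), p.2) | p <- D x, q <- D p.1]
         [seq ((p.1, q.1), q.2) | p <- D x, q <- D p.2];
  counit_l : forall x, \sum_(p <- D x) eps p.1 *: p.2 = x;
  counit_r : forall x, \sum_(p <- D x) eps p.2 *: p.1 = x
}.

Record bialg_pairing (A B : algType F) (DA : A -> seq (A * A))
    (DB : B -> seq (B * B)) (pair : A -> B -> F) : Prop := {
  pair_linl : forall b, lin_fun (fun a => pair a b);
  pair_linr : forall a, lin_fun (pair a);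
  pair_mulr : forall a b1 b2,
    pair a (b1 * b2) = \sum_(p <- DA a) pair p.1 b1 * pair p.2 b2;
  pair_mull : forall a1 a2 b,
    pair (a1 * a2) b = \sum_(p <- DB b) pair a2 p.1 * pair a1 p.2;
  pair_ndl : forall a, (forall b, pair a b = 0) -> a = 0;
  pair_ndr : forall b, (forall a, pair a b = 0) -> b = 0
}.

Definition has_fsum (I : eqType) (V : zmodType) (f : I -> V) (v : V) : Prop :=
  exists s : seq I, [/\ uniq s, (forall i, f i != 0 -> i \in s)
                      & \sum_(i <- s) f i = v].

(* R = sum_alpha ra alpha (x) rb alpha is the canonical tensor *)
Definition canonical_tensor (A B : algType F) (pair : A -> B -> F)
    (I : eqType) (ra : I -> A) (rb : I -> B) : Prop :=
  (forall b, has_fsum (fun i => pair (ra i) b *: rb i) b) /\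
  (forall a, has_fsum (fun i => pair a (rb i) *: ra i) a).

(* Elements of the completed tensor product A (x)^ B, given as formal series
   sum_i x i (x) y i, are identified with their values on B (x) A via the
   pairing: (b,a) |-> sum_i <x i, b> <a, y i>. *)
Definition ct_eval (A B : algType F) (pair : A -> B -> F) (I : eqType)
    (x : I -> A) (y : I -> B) (b : B) (a : A) (v : F) : Prop :=
  has_fsum (fun i => pair (x i) b * pair a (y i)) v.

Definition ct_eq (A B : algType F) (pair : A -> B -> F) (I : eqType)
    (x : I -> A) (y : I -> B) (x' : I -> A) (y' : I -> B) : Prop :=
  forall b a, exists v, ct_eval pair x y b a v /\ ct_eval pair x' y' b a v.

Definition mult_iso (A : algType F) (A1 A2 : {pred A}) : Prop :=
  (forall a, exists s : seq (A * A),
      all (fun p => (p.1 \in A1) && (p.2 \in A2)) s /\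
      a = \sum_(p <- s) p.1 * p.2) /\
  (forall s : seq (A * A), all (fun p => (p.1 \in A1) && (p.2 \in A2)) s ->
      \sum_(p <- s) p.1 * p.2 = 0 -> teq s [::]).

Definition coprod_into (A : algType F) (D : A -> seq (A * A))
    (S P1 P2 : {pred A}) : Prop :=
  forall a, a \in S -> exists s, teq s (D a) /\
     all (fun p => (p.1 \in P1) && (p.2 \in P2)) s.

End Defs.

(* Main.v *)
Require Import Defs.
From HB Require Import structures.
From mathcomp Require Import all_boot all_order all_algebra.
From mathcomp Require Import ring.
Import GRing.Theory.
Local Open Scope ring_scope.

Section Helpers.
Variable F : fieldType.

Lemma lin0 (V : lmodType F) (f : V -> F) : lin_fun f -> f 0 = 0.
Proof.
move=> Hf; have := Hf 1 0 0; rewrite scaler0 addr0 mul1r => E.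
by apply: (addrI (f 0)); rewrite addr0 -E.
Qed.
Arguments lin0 {V f}.

Lemma linD (V : lmodType F) (f : V -> F) x y : lin_fun f -> f (x + y) = f x + f y.
Proof. by move=> Hf; have := Hf 1 x y; rewrite scale1r mul1r. Qed.
Arguments linD {V f} x y.

Lemma linZ (V : lmodType F) (f : V -> F) k x : lin_fun f -> f (k *: x) = k * f x.
Proof. by move=> Hf; have := Hf k x 0; rewrite addr0 (lin0 Hf) addr0. Qed.
Arguments linZ {V f} k x.

Lemma lin_sum (V : lmodType F) (f : V -> F) (J : Type) (s : seq J) (g : J -> V) :
  lin_fun f -> f (\sum_(i <- s) g i) = \sum_(i <- s) f (g i).
Proof.
move=> Hf; elim: s => [|x s IH]; first by rewrite !big_nil (lin0 Hf).
by rewrite !big_cons (linD _ _ Hf) IH.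
Qed.
Arguments lin_sum {V f J} s g.

Lemma lin_sumZ (V : lmodType F) (f : V -> F) (J : Type) (s : seq J) (c : J -> F) (g : J -> V) :
  lin_fun f -> f (\sum_(i <- s) c i *: g i) = \sum_(i <- s) c i * f (g i).
Proof.
move=> Hf; rewrite (lin_sum _ _ Hf); apply: eq_bigr => i _; exact: linZ.
Qed.

Arguments lin_sumZ {V f J} s c g.

Lemma has_fsum_ext (J : eqType) (V : zmodType) (f g : J -> V) v :
  (forall i, f i = g i) -> has_fsum f v -> has_fsum g v.
Proof.
move=> E [s [H1 H2 H3]]; exists s; split => //.
  by move=> i; rewrite -E; apply: H2.
by rewrite -H3; apply: eq_bigr => i _; rewrite E.
Qed.

Variables (A B : algType F) (DA : A -> seq (A * A)) (epsA : A -> F)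
  (DB : B -> seq (B * B)) (epsB : B -> F) (pair : A -> B -> F).
Hypotheses (HA : bialgebra DA epsA) (HB : bialgebra DB epsB)
  (HP : bialg_pairing DA DB pair).

Lemma eps_linA c : lin_fun (fun x => epsA x * c).
Proof. by move=> k x y; rewrite (eps_lin HA) mulrDl mulrA. Qed.
Lemma eps_linB c : lin_fun (fun x => c * epsB x).
Proof. by move=> k x y; rewrite (eps_lin HB) mulrDr mulrCA. Qed.

Lemma pairA1 (A1 : {pred A}) (B2 : {pred B}) a1 b1 b2 :
  coprod_into DA A1 (fun _ => true) A1 ->
  (forall a b, a \in A1 -> b \in B2 -> pair a b = epsA a * epsB b) ->
  a1 \in A1 -> b2 \in B2 -> pair a1 (b1 * b2) = epsB b2 * pair a1 b1.
Proof.
move=> cA orth Ha Hb; have [s [Hs Hall]] := cA a1 Ha.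
rewrite (pair_mulr HP).
have -> : \sum_(p <- DA a1) pair p.1 b1 * pair p.2 b2 =
   tev (fun x => pair x b1) (fun x => pair x b2) (DA a1) by [].
rewrite -(Hs _ _ (pair_linl HP b1) (pair_linl HP b2)).
have -> : tev (fun x => pair x b1) (fun x => pair x b2) s =
   tev (fun x => pair x b1) (fun x => epsA x * epsB b2) s.
  rewrite /tev big_seq_cond [RHS]big_seq_cond; apply: eq_bigr => p /andP[Hp _].
  by move: (allP Hall p Hp) => /andP[_ H2]; rewrite (orth p.2).
rewrite (Hs _ _ (pair_linl HP b1) (eps_linA _)) /tev.
have -> : pair a1 b1 = pair (\sum_(p <- DA a1) epsA p.2 *: p.1) b1
  by rewrite (counit_r HA).
rewrite (lin_sumZ _ _ _ (pair_linl HP b1)) mulr_sumr; apply: eq_bigr => p _; ring.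
Qed.

Lemma pairA2 (A2 : {pred A}) (B1 : {pred B}) a2 b1 b2 :
  coprod_into DA A2 A2 (fun _ => true) ->
  (forall a b, a \in A2 -> b \in B1 -> pair a b = epsA a * epsB b) ->
  a2 \in A2 -> b1 \in B1 -> pair a2 (b1 * b2) = epsB b1 * pair a2 b2.
Proof.
move=> cA orth Ha Hb; have [s [Hs Hall]] := cA a2 Ha.
rewrite (pair_mulr HP).
have -> : \sum_(p <- DA a2) pair p.1 b1 * pair p.2 b2 =
   tev (fun x => pair x b1) (fun x => pair x b2) (DA a2) by [].
rewrite -(Hs _ _ (pair_linl HP b1) (pair_linl HP b2)).
have -> : tev (fun x => pair x b1) (fun x => pair x b2) s =
   tev (fun x => epsA x * epsB b1) (fun x => pair x b2) s.
  rewrite /tev big_seq_cond [RHS]big_seq_cond; apply: eq_bigr => p /andP[Hp _].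
  by move: (allP Hall p Hp) => /andP[H1 _]; rewrite (orth p.1).
rewrite (Hs _ _ (eps_linA _) (pair_linl HP b2)) /tev.
have -> : pair a2 b2 = pair (\sum_(p <- DA a2) epsA p.1 *: p.2) b2
  by rewrite (counit_l HA).
rewrite (lin_sumZ _ _ _ (pair_linl HP b2)) mulr_sumr; apply: eq_bigr => p _; ring.
Qed.

Lemma pairB1 (A2 : {pred A}) (B1 : {pred B}) a1 a2 b1 :
  coprod_into DB B1 B1 (fun _ => true) ->
  (forall a b, a \in A2 -> b \in B1 -> pair a b = epsA a * epsB b) ->
  a2 \in A2 -> b1 \in B1 -> pair (a1 * a2) b1 = epsA a2 * pair a1 b1.
Proof.
move=> cB orth Ha Hb; have [s [Hs Hall]] := cB b1 Hb.
rewrite (pair_mull HP).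
have -> : \sum_(p <- DB b1) pair a2 p.1 * pair a1 p.2 =
   tev (pair a2) (pair a1) (DB b1) by [].
rewrite -(Hs _ _ (pair_linr HP a2) (pair_linr HP a1)).
have -> : tev (pair a2) (pair a1) s =
   tev (fun x => epsA a2 * epsB x) (pair a1) s.
  rewrite /tev big_seq_cond [RHS]big_seq_cond; apply: eq_bigr => p /andP[Hp _].
  by move: (allP Hall p Hp) => /andP[H1 _]; rewrite (orth a2 p.1).
rewrite (Hs _ _ (eps_linB _) (pair_linr HP a1)) /tev.
have -> : pair a1 b1 = pair a1 (\sum_(p <- DB b1) epsB p.1 *: p.2)
  by rewrite (counit_l HB).
rewrite (lin_sumZ _ _ _ (pair_linr HP a1)) mulr_sumr; apply: eq_bigr => p _; ring.
Qed.

Lemma pairB2 (A1 : {pred A}) (B2 : {pred B}) a1 a2 b2 :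
  coprod_into DB B2 (fun _ => true) B2 ->
  (forall a b, a \in A1 -> b \in B2 -> pair a b = epsA a * epsB b) ->
  a1 \in A1 -> b2 \in B2 -> pair (a1 * a2) b2 = epsA a1 * pair a2 b2.
Proof.
move=> cB orth Ha Hb; have [s [Hs Hall]] := cB b2 Hb.
rewrite (pair_mull HP).
have -> : \sum_(p <- DB b2) pair a2 p.1 * pair a1 p.2 =
   tev (pair a2) (pair a1) (DB b2) by [].
rewrite -(Hs _ _ (pair_linr HP a2) (pair_linr HP a1)).
have -> : tev (pair a2) (pair a1) s =
   tev (pair a2) (fun x => epsA a1 * epsB x) s.
  rewrite /tev big_seq_cond [RHS]big_seq_cond; apply: eq_bigr => p /andP[Hp _].
  by move: (allP Hall p Hp) => /andP[_ H2]; rewrite (orth a1 p.2).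
rewrite (Hs _ _ (pair_linr HP a2) (eps_linB _)) /tev.
have -> : pair a2 b2 = pair a2 (\sum_(p <- DB b2) epsB p.2 *: p.1)
  by rewrite (counit_r HB).
rewrite (lin_sumZ _ _ _ (pair_linr HP a2)) mulr_sumr; apply: eq_bigr => p _; ring.
Qed.

Lemma key_gen (A1 A2 : {pred A}) (B1 B2 : {pred B})
  (P : {linear A -> A}) (P' : {linear B -> B}) :
  mult_iso A1 A2 -> mult_iso B1 B2 ->
  (forall x y b1 b2, x \in A1 -> y \in A2 -> b1 \in B1 -> b2 \in B2 ->
     pair (P (x * y)) (b1 * b2) = pair (x * y) (P' (b1 * b2))) ->
  forall a b, pair (P a) b = pair a (P' b).
Proof.
move=> [mA _] [mB _] H a b.
have [sa [Ha ->]] := mA a; have [sb [Hb ->]] := mB b.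
rewrite raddf_sum (lin_sum _ _ (pair_linl HP _)) (lin_sum _ _ (pair_linl HP _)).
rewrite big_seq [RHS]big_seq; apply: eq_bigr => p Hp.
move: (allP Ha p Hp) => /andP[Hp1 Hp2].
rewrite raddf_sum (lin_sum _ _ (pair_linr HP _)) (lin_sum _ _ (pair_linr HP _)).
rewrite big_seq [RHS]big_seq; apply: eq_bigr => q Hq.
move: (allP Hb q Hq) => /andP[Hq1 Hq2].
exact: H.
Qed.

Variables (I : eqType) (ra : I -> A) (rb : I -> B).
Hypothesis Hct : canonical_tensor pair ra rb.

Lemma sum_fsum a b : has_fsum (fun i => pair (ra i) b * pair a (rb i)) (pair a b).
Proof.
have [s [Hu Hn Hs]] := Hct.2 a.
exists s; split => //.
  move=> i Hi; apply: Hn; apply/eqP => E; move: Hi.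
  by rewrite mulrC -(linZ _ _ (pair_linl HP b)) E (lin0 (pair_linl HP b)) eqxx.
have -> : pair a b = pair (\sum_(i <- s) pair a (rb i) *: ra i) b by rewrite Hs.
rewrite (lin_sum _ _ (pair_linl HP b)); apply: eq_bigr => i _.
by rewrite (linZ _ _ (pair_linl HP b)) mulrC.
Qed.

Lemma final_gen (P : {linear A -> A}) (P' : {linear B -> B}) :
  (forall a b, pair (P a) b = pair a (P' b)) -> (forall b, P' (P' b) = P' b) ->
  ct_eq pair (fun i => P (ra i)) rb ra (fun i => P' (rb i)) /\
  ct_eq pair ra (fun i => P' (rb i)) (fun i => P (ra i)) (fun i => P' (rb i)).
Proof.
move=> K Id.
have E1 b a : ct_eval pair (fun i => P (ra i)) rb b a (pair a (P' b)).
  apply: has_fsum_ext (sum_fsum a (P' b)) => i; by rewrite K.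
have E2 b a : ct_eval pair ra (fun i => P' (rb i)) b a (pair a (P' b)).
  rewrite -K; apply: has_fsum_ext (sum_fsum (P a) b) => i; by rewrite K.
have E3 b a : ct_eval pair (fun i => P (ra i)) (fun i => P' (rb i)) b a (pair a (P' b)).
  rewrite -Id -K.
  apply: has_fsum_ext (sum_fsum (P a) (P' b)) => i; by rewrite !K.
split => b a; exists (pair a (P' b)); split; auto.
Qed.

End Helpers.
Arguments lin0 {F V f}.
Arguments linZ {F V f} k x.
Arguments eps_linA {F A DA epsA} HA c.
Arguments eps_linB {F B DB epsB} HB c.
Arguments pairA1 {F A B DA epsA DB epsB pair} HA HP {A1 B2 a1} b1 {b2}.
Arguments pairA2 {F A B DA epsA DB epsB pair} HA HP {A2 B1 a2 b1} b2.
Arguments pairB1 {F A B DA epsA DB epsB pair} HB HP {A2 B1} a1 {a2 b1}.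
Arguments pairB2 {F A B DA epsA DB epsB pair} HB HP {A1 B2 a1} a2 {b2}.
Arguments key_gen {F A B DA DB pair} HP {A1 A2 B1 B2 P P'}.
Arguments final_gen {F A B DA DB pair} HP {I ra rb} Hct {P P'}.

Theorem mainTheorem11 (F : fieldType) (A B : algType F)
  (DA : A -> seq (A * A)) (epsA : A -> F)
  (DB : B -> seq (B * B)) (epsB : B -> F)
  (pair : A -> B -> F)
  (I : eqType) (ra : I -> A) (rb : I -> B)
  (A1 A2 : {pred A}) (B1 B2 : {pred B})
  (Pi1 Pi2 : {linear A -> A}) (Pi1' Pi2' : {linear B -> B}) :
  bialgebra DA epsA -> bialgebra DB epsB ->
  bialg_pairing DA DB pair ->
  canonical_tensor pair ra rb ->
  (* decomposition of A *)
  subalg_closed A1 -> subalg_closed A2 -> mult_iso A1 A2 ->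
  coprod_into DA A1 (fun _ => true) A1 ->
  coprod_into DA A2 A2 (fun _ => true) ->
  (forall x y, x \in A1 -> y \in A2 -> Pi1 (x * y) = epsA y *: x) ->
  (forall x y, x \in A1 -> y \in A2 -> Pi2 (x * y) = epsA x *: y) ->
  (* decomposition of B *)
  subalg_closed B1 -> subalg_closed B2 -> mult_iso B1 B2 ->
  coprod_into DB B1 B1 (fun _ => true) ->
  coprod_into DB B2 (fun _ => true) B2 ->
  (forall x y, x \in B1 -> y \in B2 -> Pi1' (x * y) = epsB y *: x) ->
  (forall x y, x \in B1 -> y \in B2 -> Pi2' (x * y) = epsB x *: y) ->
  (* mutual orthogonality *)
  (forall a b, a \in A1 -> b \in B2 -> pair a b = epsA a * epsB b) ->
  (forall a b, a \in A2 -> b \in B1 -> pair a b = epsA a * epsB b) ->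
  (* (Pi_i (x) id) R = (id (x) Pi'_i) R = (Pi_i (x) Pi'_i) R, i = 1, 2 *)
  (ct_eq pair (fun i => Pi1 (ra i)) rb ra (fun i => Pi1' (rb i)) /\
   ct_eq pair ra (fun i => Pi1' (rb i)) (fun i => Pi1 (ra i)) (fun i => Pi1' (rb i))) /\
  (ct_eq pair (fun i => Pi2 (ra i)) rb ra (fun i => Pi2' (rb i)) /\
   ct_eq pair ra (fun i => Pi2' (rb i)) (fun i => Pi2 (ra i)) (fun i => Pi2' (rb i))).
Proof.
move=> HA HB HP Hct _ _ mA cA1 cA2 P1 P2 [B11 _ _] [B21 _ _] mB cB1 cB2 P1' P2' o12 o21.
split; apply: (final_gen HP Hct).
- apply: (key_gen HP mA mB) => x y b1 b2 Hx Hy Hb1 Hb2.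
  rewrite P1 // P1' // (linZ _ _ (pair_linl HP _)) (linZ _ _ (pair_linr HP _)).
  rewrite (pairA1 HA HP b1 cA1 o12 Hx Hb2) (pairB1 HB HP x cB1 o21 Hy Hb1); ring.
- move=> b; have [s [Hs ->]] := mB.1 b.
  rewrite !raddf_sum; apply: eq_big_seq => q Hq.
  move: (allP Hs q Hq) => /andP[Hq1 Hq2].
  have E := P1' _ _ Hq1 Hq2; rewrite /= E linearZ /=; congr (_ *: _).
  have E1 := P1' _ _ Hq1 B21; rewrite mulr1 in E1.
  by rewrite /= E1 (eps_one HB) scale1r.
- apply: (key_gen HP mA mB) => x y b1 b2 Hx Hy Hb1 Hb2.
  rewrite P2 // P2' // (linZ _ _ (pair_linl HP _)) (linZ _ _ (pair_linr HP _)).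
  rewrite (pairA2 HA HP b2 cA2 o21 Hy Hb1) (pairB2 HB HP y cB2 o12 Hx Hb2); ring.
- move=> b; have [s [Hs ->]] := mB.1 b.
  rewrite !raddf_sum; apply: eq_big_seq => q Hq.
  move: (allP Hs q Hq) => /andP[Hq1 Hq2].
  have E := P2' _ _ Hq1 Hq2; rewrite /= E linearZ /=; congr (_ *: _).
  have E1 := P2' _ _ B11 Hq2; rewrite mul1r in E1.
  by rewrite /= E1 (eps_one HB) scale1r.
Qed.
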